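(* For all positive integers $m,n,w,d$ with $w\le m$, $$A(m,n,w,d)\le C\left(\binom{m}{w},n,\left\lceil\frac{d}{w}\right\rceil\right).$$
   Context: $J(m,w)$ denotes the set of binary vectors of length $m$ and Hamming weight $w$. Elements of $J(m,w)^n$ are identified with $m\times n$ binary matrices all of whose columns have weight $w$, with binary Hamming distance. $A(m,n,w,d)$ is the maximum cardinality of a nonempty subset of $J(m,w)^n$ with pairwise Hamming distances at least $2d$. $C(q,n,d)$ is the maximum cardinality of a nonempty subset of $[q]^n$, $[q]=\{0,\dots,q-1\}$, with pairwise Hamming distances (number of differing coordinates) at least $d$. *)

(* Defs.v *)
From mathcomp Require Import all_boot all_order all_algebra.
Set Implicit Arguments. Unset Strict Implicit. Unset Printing Implicit Defensive.

(* Elements of J(m,w)^n : m x n binary matrices, every column of weight w. *)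
Definition constant_weight_cols (m n w : nat) (M : 'M[bool]_(m, n)) : bool :=
  [forall j : 'I_n, #|[set i : 'I_m | M i j]| == w].

Definition mx_dist (m n : nat) (M N : 'M[bool]_(m, n)) : nat :=
  #|[set ij : 'I_m * 'I_n | M ij.1 ij.2 != N ij.1 ij.2]|.

Definition is_mcw_code (m n w d : nat) (S : {set 'M[bool]_(m, n)}) : bool :=
  [&& S != set0,
      [forall M in S, constant_weight_cols w M] &
      [forall M in S, forall N in S, (M != N) ==> (2 * d <= mx_dist M N)]].

Definition A_max (m n w d : nat) : nat :=
  \max_(S : {set 'M[bool]_(m, n)} | is_mcw_code w d S) #|S|.

Definition ham_dist (q n : nat) (x y : {ffun 'I_n -> 'I_q}) : nat :=
  #|[set i : 'I_n | x i != y i]|.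

Definition is_qary_code (q n d : nat) (S : {set {ffun 'I_n -> 'I_q}}) : bool :=
  [&& S != set0 &
      [forall x in S, forall y in S, (x != y) ==> (d <= ham_dist x y)]].

Definition C_max (q n d : nat) : nat :=
  \max_(S : {set {ffun 'I_n -> 'I_q}} | is_qary_code d S) #|S|.

Definition ceil_div (d w : nat) : nat := (d + w.-1) %/ w.

(* Main.v *)
Require Import Defs.
From mathcomp Require Import all_boot all_order all_algebra.
From mathcomp Require Import zify.

Lemma mx_dist_sum (m n : nat) (M N : 'M[bool]_(m, n)) :
  mx_dist M N = \sum_(j < n) #|[set i : 'I_m | M i j != N i j]|.
Proof.
rewrite /mx_dist -sum1_card big_mkcond.
transitivity (\sum_(ij : 'I_m * 'I_n) (M ij.1 ij.2 != N ij.1 ij.2 : nat)).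
  by apply: eq_bigr => ij _; rewrite inE; case: (_ != _).
rewrite -(pair_big xpredT xpredT (fun i j => (M i j != N i j : nat))) /=.
rewrite exchange_big /=; apply: eq_bigr => j _.
rewrite -sum1_card big_mkcond [RHS]big_mkcond; apply: eq_bigr => i _.
by rewrite inE; case: (_ != _).
Qed.

Lemma col_diff_le (m n w : nat) (M N : 'M[bool]_(m, n)) (j : 'I_n) :
  #|[set i : 'I_m | M i j]| = w -> #|[set i : 'I_m | N i j]| = w ->
  #|[set i : 'I_m | M i j != N i j]| <= 
   (([set i : 'I_m | M i j] != [set i : 'I_m | N i j]) : nat) * (2 * w).
Proof.
move=> HM HN.
case: eqP => [E|_].
  rewrite mul0n leqn0 cards_eq0; apply/eqP/setP => i; rewrite !inE.
  by move/setP: E => /(_ i); rewrite !inE => ->; rewrite eqxx.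
rewrite mul1n.
apply: leq_trans (_ : #|[set i | M i j] :|: [set i | N i j]| <= _).
  apply: subset_leq_card; apply/subsetP => i; rewrite !inE.
  by case: (M i j); case: (N i j).
by apply: leq_trans (leq_card_setU _ _) _; rewrite HM HN mul2n addnn.
Qed.

Theorem proposition10 (m n w d : nat) :
  0 < m -> 0 < n -> 0 < w -> 0 < d -> w <= m ->
  A_max m n w d <= C_max 'C(m, w) n (ceil_div d w).
Proof.
move=> m0 n0 w0 d0 wm.
pose K := [set A : {set 'I_m} | #|A| == w].
have eK : #|K| = 'C(m, w) by rewrite /K card_draws card_ord.
have [x0 x0K] : {x0 | x0 \in K}.
  have : 0 < #|K| by rewrite eK bin_gt0.
  by case/card_gt0P/sigW => x Hx; exists x.
pose col (M : 'M[bool]_(m, n)) (j : 'I_n) := [set i : 'I_m | M i j].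
pose phi (M : 'M[bool]_(m, n)) : {ffun 'I_n -> 'I_('C(m, w))} :=
  [ffun j => cast_ord eK (enum_rank_in x0K (col M j))].
apply/bigmax_leqP => S /and3P [S0 /forall_inP Sw /forall_inP Sd].
have colK : forall M, M \in S -> forall j, col M j \in K.
  by move=> M /Sw /forallP Hc j; rewrite inE; exact: Hc.
have phiE : forall M N, M \in S -> N \in S -> forall j,
    (phi M j != phi N j) = (col M j != col N j).
  move=> M N MS NS j; rewrite !ffunE.
  apply/idP/idP; apply: contra => /eqP E; apply/eqP.
    by rewrite E.
  by move/cast_ord_inj: E => /(enum_rank_in_inj (colK _ MS j) (colK _ NS j)).
have key : forall M N, M \in S -> N \in S -> M != N ->
    ceil_div d w <= ham_dist (phi M) (phi N).
  move=> M N MS NS MN.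
  have := Sd M MS => /forall_inP /(_ N NS) /implyP /(_ MN).
  rewrite mx_dist_sum => H.
  have H2 : 2 * d <= ham_dist (phi M) (phi N) * (2 * w).
    apply: leq_trans H _.
    rewrite /ham_dist -sum_nat_const [in X in _ <= X]big_mkcond.
    apply: leq_sum => j _; rewrite inE phiE //.
    have := colK _ MS j; have := colK _ NS j; rewrite !inE => /eqP h1 /eqP h2.
    have := @col_diff_le _ _ _ M N j h2 h1.
    by case: (_ != _); rewrite ?mul0n ?mul1n.
  have hd : d <= ham_dist (phi M) (phi N) * w.
    by rewrite -(leq_pmul2l (isT : 0 < 2)) mulnCA.
  rewrite /ceil_div -ltnS ltn_divLR //.
  move: hd; set h := ham_dist _ _ => hd; rewrite mulSn; lia.
have c1 : 0 < ceil_div d w.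
  by rewrite /ceil_div divn_gt0 //; lia.
have inj : {in S &, injective phi}.
  move=> M N MS NS E; apply/eqP; apply: contraT => MN.
  have := key M N MS NS MN; rewrite E /ham_dist.
  have -> : [set i | phi N i != phi N i] = set0 by apply/setP => i; rewrite !inE eqxx.
  by rewrite cards0 leqn0 => /eqP h0; move: c1; rewrite h0.
rewrite -(card_in_imset inj); apply: leq_bigmax_cond.
apply/andP; split.
  case/set0Pn: S0 => M MS; apply/set0Pn; exists (phi M); exact: imset_f.
apply/forall_inP => x /imsetP [M MS ->]; apply/forall_inP => y /imsetP [N NS ->].
apply/implyP => H; apply: key => //; apply: contraNneq H => ->; exact: eqxx.
Qed.
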